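(* Let $s\ge 1$ and let $p\in F_{2,2s}$ be a product of $2s$ real linear forms, with $p\ne\pm\ell^{2s}$ for every real linear form $\ell$. If $(a,b)\in\mathcal B(p)$, then $a\ge s$ and $b\ge s$.
   Context: $F_{2,2s}$ is the real vector space of real binary forms of degree $2s$ in $x,y$. A representation of $p\in F_{2,2s}$ is an expression $p=\sum_{j=1}^r\lambda_j(\alpha_jx+\beta_jy)^{2s}$ with $r\ge 0$ (the empty sum being $0$), $\alpha_j,\beta_j\in\mathbb R$ and $0\ne\lambda_j\in\mathbb R$; it is honest if the linear forms $\alpha_jx+\beta_jy$ are pairwise non-proportional. Its badge is $(a,b)$, where $a$ (resp. $b$) is the number of indices $j$ with $\lambda_j>0$ (resp. $\lambda_j<0$). $\mathcal B(p)$ denotes the set of badges of all honest representations of $p$. *)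

(* Defs.v *)
(* real binary forms represented as polynomial functions R -> R -> R.
   Since R is infinite, equality of forms coincides with equality of the
   associated functions. *)
From Stdlib Require Import Reals List Arith.
Open Scope R_scope.

Definition linform (alpha beta x y : R) : R := alpha * x + beta * y.

Definition prod_lin (L : list (R * R)) (x y : R) : R :=
  fold_right (fun ab acc => linform (fst ab) (snd ab) x y * acc) 1 L.

Definition is_prod_of_linforms (n : nat) (p : R -> R -> R) : Prop :=
  exists L : list (R * R), length L = n /\ forall x y, p x y = prod_lin L x y.

Definition rep_eval (d : nat) (rep : list (R * R * R)) (x y : R) : R :=
  fold_right (fun t acc =>
     let '(lam, al, be) := t in lam * (linform al be x y) ^ d + acc) 0 rep.

Definition term_lam (t : R * R * R) : R := let '(lam, _, _) := t in lam.
Definition term_al (t : R * R * R) : R := let '(_, al, _) := t in al.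
Definition term_be (t : R * R * R) : R := let '(_, _, be) := t in be.

Definition is_rep (d : nat) (p : R -> R -> R) (rep : list (R * R * R)) : Prop :=
  (forall t, In t rep -> term_lam t <> 0) /\
  (forall x y, p x y = rep_eval d rep x y).

Definition honest (rep : list (R * R * R)) : Prop :=
  forall i j : nat, (i < j)%nat -> (j < length rep)%nat ->
    let ti := nth i rep (0, 0, 0) in
    let tj := nth j rep (0, 0, 0) in
    term_al ti * term_be tj - term_al tj * term_be ti <> 0.

Definition is_posb (t : R * R * R) : bool :=
  if Rlt_dec 0 (term_lam t) then true else false.
Definition is_negb (t : R * R * R) : bool :=
  if Rlt_dec (term_lam t) 0 then true else false.

Definition badge (rep : list (R * R * R)) : nat * nat :=
  (length (filter is_posb rep), length (filter is_negb rep)).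

Definition badges (d : nat) (p : R -> R -> R) (ab : nat * nat) : Prop :=
  exists rep, is_rep d p rep /\ honest rep /\ badge rep = ab.

(* Main.v *)
Require Import Defs.
From Stdlib Require Import Reals List Arith Lra Lia Permutation Sorting.Sorted FunctionalExtensionality Classical.
Import ListNotations.
Open Scope R_scope.

Fixpoint peval (l : list R) (t : R) : R :=
  match l with [] => 0 | a :: l' => a + t * peval l' t end.

Definition PD (m : nat) (f : R -> R) : Prop :=
  exists l, (length l <= S m)%nat /\ forall t, f t = peval l t.

Lemma PD_ext m f g : (forall t, f t = g t) -> PD m f -> PD m g.
Proof. intros H [l [Hl He]]. exists l. split; auto. intro t. rewrite <- H. auto. Qed.

Lemma PD_mono m m' f : (m <= m')%nat -> PD m f -> PD m' f.
Proof. intros H [l [Hl He]]. exists l. split; [lia|auto]. Qed.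

Lemma PD_const c : PD 0 (fun _ => c).
Proof. exists [c]. split; [simpl; lia|]. intro; simpl; ring. Qed.

Fixpoint padd (l1 l2 : list R) : list R :=
  match l1, l2 with
  | [], _ => l2
  | _, [] => l1
  | a :: r1, b :: r2 => (a + b) :: padd r1 r2
  end.

Lemma padd_eval l1 l2 t : peval (padd l1 l2) t = peval l1 t + peval l2 t.
Proof. revert l2; induction l1 as [|a r IH]; intros [|b r2]; simpl; try ring. rewrite IH; ring. Qed.

Lemma padd_len l1 l2 m : (length l1 <= m)%nat -> (length l2 <= m)%nat -> (length (padd l1 l2) <= m)%nat.
Proof. revert l2 m; induction l1 as [|a r IH]; intros [|b r2] m H1 H2; simpl in *; try lia.
  destruct m; [lia|]. specialize (IH r2 m). lia. Qed.

Lemma PD_add m f g : PD m f -> PD m g -> PD m (fun t => f t + g t).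
Proof. intros [l1 [H1 E1]] [l2 [H2 E2]]. exists (padd l1 l2). split. apply padd_len; auto.
 intro t. rewrite padd_eval, E1, E2. reflexivity. Qed.

Lemma PD_scal m c f : PD m f -> PD m (fun t => c * f t).
Proof. intros [l [H E]]. exists (map (fun a => c * a) l). split. rewrite length_map; auto.
 intro t. rewrite E. clear. induction l; simpl; [ring|]. rewrite <- IHl. ring. Qed.

Lemma PD_mulX m f : PD m f -> PD (S m) (fun t => t * f t).
Proof. intros [l [H E]]. exists (0 :: l). split. simpl; lia. intro t. simpl. rewrite E. ring. Qed.

Lemma PD_lin m a b f : PD m f -> PD (S m) (fun t => (a + b * t) * f t).
Proof. intro H. apply PD_ext with (fun t => a * f t + b * (t * f t)).
 intro; ring. apply PD_add. apply PD_mono with m; [lia|]. apply PD_scal; auto.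
 apply PD_scal. apply PD_mulX; auto. Qed.

Fixpoint quot (r : R) (l : list R) : list R :=
  match l with
  | [] => []
  | a :: l' => match l' with [] => [] | _ => peval l' r :: quot r l' end
  end.

Lemma quot_eval r l t : peval l t = peval l r + (t - r) * peval (quot r l) t.
Proof. induction l as [|a l IH]; simpl. ring. destruct l as [|b l'].
 simpl. ring. simpl in *. rewrite IH at 1. ring. Qed.

Lemma quot_len r l : length (quot r l) = pred (length l).
Proof. induction l as [|a l IH]; simpl. auto. destruct l; simpl in *; auto. Qed.

Lemma PD_factor m f r : PD (S m) f -> f r = 0 -> exists g, PD m g /\ forall t, f t = (t - r) * g t.
Proof. intros [l [Hl E]] Hr. exists (peval (quot r l)). split.
 exists (quot r l). split; auto. rewrite quot_len. lia.
 intro t. rewrite E, quot_eval with (r := r). rewrite <- E, Hr. ring. Qed.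

Lemma PD0_const f : PD 0 f -> forall t, f t = f 0.
Proof. intros [l [Hl E]] t. rewrite !E. destruct l as [|a [|b l]]; simpl in *; try lia; ring. Qed.

Definition Pr (tau : list R) (t : R) : R := fold_right (fun z acc => (t - z) * acc) 1 tau.

Lemma vanish : forall tau m f, length tau = m -> NoDup tau -> PD m f ->
  (forall z, In z tau -> f z = 0) -> exists c, forall t, f t = c * Pr tau t.
Proof. induction tau as [|z tau IH]; intros m f Hl Hn Hp Hz.
 - simpl in Hl. subst. exists (f 0). intro t. simpl. rewrite (PD0_const f Hp t). ring.
 - simpl in Hl. subst m. destruct (PD_factor _ _ z Hp (Hz z (or_introl eq_refl))) as [g [Hg Eg]].
   inversion Hn; subst.
   destruct (IH (length tau) g eq_refl H2 Hg) as [c Ec].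
   { intros z' Hz'. assert (f z' = 0) by (apply Hz; right; auto).
     rewrite Eg in H. assert (z' - z <> 0). { intro. assert (z' = z) by lra. subst. auto. }
     apply Rmult_integral in H. destruct H; auto. contradiction. }
   exists c. intro t. rewrite Eg, Ec. simpl. ring. Qed.

Lemma Pr_nonzero tau t : (forall z, In z tau -> t <> z) -> Pr tau t <> 0.
Proof. induction tau as [|z tau IH]; intros H; simpl. lra.
 apply Rmult_integral_contrapositive_currified. specialize (H z (or_introl eq_refl)). lra.
 apply IH. intros; apply H; right; auto. Qed.

Lemma zero_count m f : PD m f -> (forall s, s <> 0 -> f s = 0) -> f 0 = 0.
Proof. intros Hp Hz.
 set (tau := map (fun k => INR (S k)) (seq 0 m)).
 assert (Hl : length tau = m) by (unfold tau; rewrite length_map, length_seq; auto).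
 assert (Hn : NoDup tau).
 { unfold tau. apply FinFun.Injective_map_NoDup. intros x y E. apply INR_eq in E. lia. apply seq_NoDup. }
 destruct (vanish tau m f Hl Hn Hp) as [c Ec].
 { intros z Hz'. apply Hz. unfold tau in Hz'. apply in_map_iff in Hz'. destruct Hz' as [k [<- _]].
   apply not_0_INR. lia. }
 assert (Hc : c = 0).
 { specialize (Ec (INR (S m))). rewrite Hz in Ec. 2: apply not_0_INR; lia.
   assert (Pr tau (INR (S m)) <> 0).
   { apply Pr_nonzero. intros z Hz'. unfold tau in Hz'. apply in_map_iff in Hz'. destruct Hz' as [k [<- Hk]].
     apply in_seq in Hk. intro E. apply INR_eq in E. lia. }
   symmetry in Ec. apply Rmult_integral in Ec. destruct Ec as [E|E]; [lra|]. contradiction. }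
 rewrite Ec, Hc. ring. Qed.

Lemma cont_peval l : continuity (peval l).
Proof. induction l as [|a l IH].
 - assert (E : peval [] = fct_cte 0) by (apply functional_extensionality; reflexivity).
   rewrite E. apply continuity_const. intros x y; reflexivity.
 - assert (E : peval (a :: l) = plus_fct (fct_cte a) (mult_fct id (peval l))) by (apply functional_extensionality; reflexivity).
   rewrite E. apply continuity_plus. apply continuity_const. intros x y; reflexivity.
   apply continuity_mult; auto. apply derivable_continuous, derivable_id. Qed.

Lemma PD_cont m f : PD m f -> continuity f.
Proof. intros [l [_ E]]. assert (f = peval l) by (apply functional_extensionality; auto). subst. apply cont_peval. Qed.

Lemma PD_Pr tau : PD (length tau) (Pr tau).
Proof. induction tau as [|z tau IH]. simpl. apply PD_ext with (fun _ => 1). intro; reflexivity. apply PD_const.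
 simpl. apply PD_ext with (fun t => (-z + 1 * t) * Pr tau t). intro; simpl; ring. apply PD_lin; auto. Qed.

Definition Pw (L : list (R*R)) (t : R) := Pr (map fst L) t.
Fixpoint Sw (L : list (R*R)) (t : R) : R :=
  match L with [] => 0 | p :: L' => snd p * Pw L' t + (t - fst p) * Sw L' t end.

Lemma Pw_cons p L t : Pw (p :: L) t = (t - fst p) * Pw L t.
Proof. reflexivity. Qed.

Lemma PD_Sw L : PD (pred (length L)) (Sw L).
Proof. induction L as [|p L IH]. simpl. apply PD_ext with (fun _ => 0). intro; reflexivity. apply PD_const.
 simpl. destruct L as [|q L].
 - apply PD_ext with (fun _ => snd p). intro t. simpl. unfold Pw; simpl. ring. apply PD_const.
 - apply PD_add. apply PD_scal. unfold Pw. pose proof (PD_Pr (map fst (q :: L))). rewrite length_map in H. auto.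
   apply PD_ext with (fun t => (- fst p + 1 * t) * Sw (q :: L) t). intro; ring.
   replace (length (q::L)) with (S (length L)) by reflexivity. apply PD_lin. simpl in IH. exact IH. Qed.

Lemma perm_SP L M : Permutation L M -> forall t, Pw L t = Pw M t /\ Sw L t = Sw M t.
Proof. induction 1; intro t.
 - auto.
 - destruct (IHPermutation t) as [A B]. rewrite !Pw_cons. simpl. rewrite A, B. auto.
 - simpl. rewrite !Pw_cons. split; ring.
 - destruct (IHPermutation1 t), (IHPermutation2 t). split; congruence. Qed.

Lemma Sw_merge r w1 w2 R t : Sw ((r,w1)::(r,w2)::R) t = (t - r) * Sw ((r, w1 + w2) :: R) t.
Proof. simpl. rewrite !Pw_cons. simpl. ring. Qed.

Fixpoint cnt (x : R) (l : list R) : nat :=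
  match l with [] => O | z :: l' => if Rlt_dec x z then S (cnt x l') else cnt x l' end.

Lemma Pr_sign x l : ~ In x l -> 0 < Pr l x * (-1) ^ (cnt x l).
Proof. induction l as [|z l IH]; intro H; simpl. lra.
 assert (x <> z) by (intro; apply H; left; auto).
 assert (H1 : 0 < Pr l x * (-1) ^ cnt x l) by (apply IH; intro; apply H; right; auto).
 destruct (Rlt_dec x z). simpl. replace ((x - z) * Pr l x * (-1 * (-1) ^ cnt x l)) with ((z - x) * (Pr l x * (-1) ^ cnt x l)) by ring.
 apply Rmult_lt_0_compat; lra.
 replace ((x - z) * Pr l x * ((-1) ^ cnt x l)) with ((x - z) * (Pr l x * (-1) ^ cnt x l)) by ring.
 apply Rmult_lt_0_compat; lra. Qed.

Lemma Pr_root x l : In x l -> Pr l x = 0.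
Proof. induction l as [|z l IH]; intro H; simpl. destruct H. destruct H. subst. ring. rewrite IH; auto. ring. Qed.

Lemma Sw_sign L x : NoDup (map fst L) -> (forall p, In p L -> 0 < snd p) -> In x (map fst L) ->
  0 < Sw L x * (-1) ^ (cnt x (map fst L)).
Proof. induction L as [|p L IH]; intros Hn Hw Hx. destruct Hx.
 simpl in *. inversion Hn; subst.
 destruct (Req_dec x (fst p)) as [E|E].
 - subst x. destruct (Rlt_dec (fst p) (fst p)). lra.
   pose proof (Pr_sign (fst p) (map fst L) H1). unfold Pw.
   replace ((snd p * Pr (map fst L) (fst p) + (fst p - fst p) * Sw L (fst p)) * (-1) ^ cnt (fst p) (map fst L))
     with (snd p * (Pr (map fst L) (fst p) * (-1) ^ cnt (fst p) (map fst L))) by ring.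
   apply Rmult_lt_0_compat; auto.
 - destruct Hx as [Hx|Hx]. congruence.
   unfold Pw. rewrite (Pr_root x _ Hx).
   assert (H1' : 0 < Sw L x * (-1) ^ cnt x (map fst L)) by (apply IH; auto).
   destruct (Rlt_dec x (fst p)). simpl.
   replace ((snd p * 0 + (x - fst p) * Sw L x) * (-1 * (-1) ^ cnt x (map fst L))) with ((fst p - x) * (Sw L x * (-1) ^ cnt x (map fst L))) by ring.
   apply Rmult_lt_0_compat; lra.
   replace ((snd p * 0 + (x - fst p) * Sw L x) * ((-1) ^ cnt x (map fst L))) with ((x - fst p) * (Sw L x * (-1) ^ cnt x (map fst L))) by ring.
   apply Rmult_lt_0_compat; lra. Qed.

Definition ltf (p q : R*R) := fst p < fst q.

Lemma ins (p : R*R) : forall M, StronglySorted ltf M -> ~ In (fst p) (map fst M) ->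
  exists M2, Permutation (p :: M) M2 /\ StronglySorted ltf M2.
Proof. induction M as [|q M IH]; intros Hs Hn.
 - exists [p]. split; auto. constructor; auto.
 - inversion Hs; subst. simpl in Hn.
   assert (fst p <> fst q) by (intro; apply Hn; left; auto).
   destruct (Rlt_dec (fst p) (fst q)).
   + exists (p :: q :: M). split; auto. constructor; auto. constructor; auto.
     rewrite Forall_forall in H2 |- *. intros x Hx. unfold ltf in *. specialize (H2 x Hx). lra.
   + destruct (IH H1) as [M3 [P3 S3]]. intro; apply Hn; right; auto.
     exists (q :: M3). split. eapply perm_trans. apply perm_swap. constructor; auto.
     constructor; auto. rewrite Forall_forall in H2 |- *. intros x Hx.
     apply (Permutation_in _ (Permutation_sym P3)) in Hx. destruct Hx as [<-|Hx].
     unfold ltf; lra. auto. Qed.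

Lemma sort_exists : forall L : list (R*R), NoDup (map fst L) ->
  exists M, Permutation L M /\ StronglySorted ltf M.
Proof. induction L as [|p L IH]; intro Hn. exists []; split; auto; constructor.
 simpl in Hn. inversion Hn; subst. destruct (IH H2) as [M [PM SM]].
 destruct (ins p M SM) as [M2 [P2 S2]].
 intro Hin. apply H1. apply (Permutation_in _ (Permutation_sym (Permutation_map fst PM))). auto.
 exists M2. split; auto. eapply perm_trans. constructor. eauto. auto. Qed.

Lemma SS_map M : StronglySorted ltf M -> StronglySorted Rlt (map fst M).
Proof. induction 1; simpl; constructor; auto. apply Forall_map. auto. Qed.

Lemma cnt_all x l : Forall (Rlt x) l -> cnt x l = length l.
Proof. induction 1; simpl; auto. destruct (Rlt_dec x x0); [auto|contradiction]. Qed.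

Lemma cnt_adj l1 a b l2 : StronglySorted Rlt (l1 ++ a :: b :: l2) ->
  cnt a (l1 ++ a :: b :: l2) = S (cnt b (l1 ++ a :: b :: l2)).
Proof. induction l1 as [|z l1 IH]; intro Hs; simpl in *.
 - inversion Hs; subst. inversion H1; subst. inversion H2; subst.
   destruct (Rlt_dec a a). lra. destruct (Rlt_dec a b); [|contradiction].
   destruct (Rlt_dec b a). lra. destruct (Rlt_dec b b). lra.
   rewrite !cnt_all; auto.
 - inversion Hs; subst. rewrite Forall_forall in H2.
   assert (z < a) by (apply H2; apply in_or_app; right; left; auto).
   assert (z < b) by (apply H2; apply in_or_app; right; right; left; auto).
   destruct (Rlt_dec a z). lra. destruct (Rlt_dec b z). lra. auto. Qed.

Definition Adj (f : R -> R) (l : list R) := forall l1 a b l2, l = l1 ++ a :: b :: l2 -> f a * f b < 0.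

Lemma build f : continuity f -> forall l, StronglySorted Rlt l -> Adj f l ->
  exists tau, length tau = pred (length l) /\ NoDup tau /\ (forall z, In z tau -> f z = 0) /\
   (forall a l', l = a :: l' -> forall z, In z tau -> a < z).
Proof. intros Hc. induction l as [|a l IH]; intros Hs Ha.
 - exists []. repeat split; simpl; auto. constructor. intros ? []. intros ? ? ? ? [].
 - destruct l as [|b rest].
   + exists []. repeat split; simpl; auto. constructor. intros ? []. intros ? ? ? ? [].
   + inversion Hs; subst. inversion H2; subst.
     assert (Hab : f a * f b < 0) by (apply (Ha [] a b rest); auto).
     destruct (IVT_cor f a b Hc (Rlt_le _ _ H3) (Rlt_le _ _ Hab)) as [z [[Hz1 Hz2] Hz]].
     assert (f a <> 0) by (intro E; rewrite E in Hab; lra).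
     assert (f b <> 0) by (intro E; rewrite E in Hab; lra).
     assert (z <> a) by (intro; subst; contradiction).
     assert (z <> b) by (intro; subst; contradiction).
     destruct (IH H1) as [tau [L1 [N1 [Z1 H1']]]].
     { intros l1 a' b' l2 E. apply (Ha (a :: l1) a' b' l2). rewrite E. auto. }
     specialize (H1' b rest eq_refl).
     exists (z :: tau). split; [simpl in *; lia|]. split. constructor; auto.
     intro Hin. specialize (H1' z Hin). lra.
     split. intros z' [<-|Hz']; auto.
     intros a' l' E z' Hz'. injection E; intros; subst a'. destruct Hz' as [<-|Hz']. lra.
     specialize (H1' z' Hz'). lra. Qed.

Lemma sq_m1 n : (-1) ^ n * (-1) ^ n = 1.
Proof. induction n; simpl. ring. replace (-1 * (-1) ^ n * (-1 * (-1) ^ n)) with ((-1) ^ n * (-1) ^ n) by ring. auto. Qed.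

Lemma distinct_case L : L <> [] -> NoDup (map fst L) -> (forall p, In p L -> 0 < snd p) ->
  exists c tau, length tau = pred (length L) /\ forall t, Sw L t = c * Pr tau t.
Proof. intros Hne Hn Hw. destruct (sort_exists L Hn) as [M [PM SM]].
 assert (HnM : NoDup (map fst M)) by (eapply Permutation_NoDup; [apply Permutation_map; eauto|auto]).
 assert (HwM : forall p, In p M -> 0 < snd p) by (intros p Hp; apply Hw; apply (Permutation_in _ (Permutation_sym PM)); auto).
 assert (Hc : continuity (Sw M)) by (eapply PD_cont; apply PD_Sw).
 destruct (build (Sw M) Hc (map fst M) (SS_map M SM)) as [tau [Lt [Nt [Zt _]]]].
 { intros l1 a b l2 E.
   assert (Ha : In a (map fst M)) by (rewrite E; apply in_or_app; right; left; auto).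
   assert (Hb : In b (map fst M)) by (rewrite E; apply in_or_app; right; right; left; auto).
   pose proof (Sw_sign M a HnM HwM Ha). pose proof (Sw_sign M b HnM HwM Hb).
   pose proof (SS_map M SM) as S2. rewrite E in S2. pose proof (cnt_adj _ _ _ _ S2) as C.
   rewrite <- E in C. rewrite C in H. simpl in H.
   pose proof (sq_m1 (cnt b (map fst M))).
   set (e := (-1) ^ cnt b (map fst M)) in *.
   assert (0 < (Sw M a * (-1 * e)) * (Sw M b * e)) by (apply Rmult_lt_0_compat; auto).
   replace (Sw M a * (-1 * e) * (Sw M b * e)) with (- (Sw M a * Sw M b) * (e * e)) in H2 by ring.
   rewrite H1 in H2. lra. }
 rewrite length_map in Lt.
 destruct (vanish tau _ (Sw M) Lt Nt (PD_Sw M) Zt) as [c Ec].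
 exists c, tau. split. rewrite Lt. apply Permutation_length in PM. auto.
 intro t. destruct (perm_SP L M PM t) as [_ ->]. auto. Qed.

Lemma not_nodup : forall L : list (R*R), ~ NoDup (map fst L) ->
  exists p q R, Permutation L (p :: q :: R) /\ fst p = fst q.
Proof. induction L as [|x L IH]; intro H. exfalso; apply H; constructor.
 simpl in H. destruct (classic (In (fst x) (map fst L))) as [Hi|Hi].
 - apply in_map_iff in Hi. destruct Hi as [q [Eq Hq]]. apply in_split in Hq. destruct Hq as [l1 [l2 ->]].
   exists x, q, (l1 ++ l2). split; auto. constructor. apply Permutation_sym, Permutation_middle.
 - destruct IH as [p [q [R [P E]]]]. intro; apply H; constructor; auto.
   exists p, q, (x :: R). split; auto. eapply perm_trans. constructor. exact P.
   eapply perm_trans. apply perm_swap. constructor. apply perm_swap. Qed.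

Lemma UNI : forall n L, length L = n -> L <> [] -> (forall p, In p L -> 0 < snd p) ->
  exists c tau, length tau = pred n /\ forall t, Sw L t = c * Pr tau t.
Proof. intro n. induction n as [n IH] using lt_wf_ind. intros L Hl Hne Hw.
 destruct (classic (NoDup (map fst L))) as [Hn|Hn].
 - subst. apply distinct_case; auto.
 - destruct (not_nodup L Hn) as [[r w1] [[r' w2] [R [P E]]]]. simpl in E. subst r'.
   assert (Hl2 : length L = S (S (length R))) by (apply Permutation_length in P; auto).
   assert (Hw1 : 0 < w1) by (apply (Hw (r,w1)); apply (Permutation_in _ (Permutation_sym P)); left; auto).
   assert (Hw2 : 0 < w2) by (apply (Hw (r,w2)); apply (Permutation_in _ (Permutation_sym P)); right; left; auto).
   destruct (IH (S (length R)) ltac:(lia) ((r, w1 + w2) :: R) eq_refl ltac:(discriminate)) as [c [tau [Lt Et]]].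
   { intros p [<-|Hp]. simpl; lra. apply Hw. apply (Permutation_in _ (Permutation_sym P)). right; right; auto. }
   exists c, (r :: tau). split. simpl. lia.
   intro t. destruct (perm_SP _ _ P t) as [_ ->]. rewrite Sw_merge, Et. simpl. ring. Qed.

Definition Sc (u : R) (L : list (R*R)) := map (fun p => (u * fst p, snd p)) L.

Lemma Pr_scale u tau t : u <> 0 -> Pr (map (fun z => u * z) tau) t = u ^ (length tau) * Pr tau (t / u).
Proof. intro Hu. induction tau as [|z tau IH]; simpl. ring. rewrite IH. field. auto. Qed.

Lemma Pw_scale u L t : u <> 0 -> Pw (Sc u L) t = u ^ (length L) * Pw L (t / u).
Proof. intro Hu. unfold Pw, Sc. rewrite map_map. simpl.
 replace (map (fun x => u * fst x) L) with (map (fun z => u * z) (map fst L)) by (rewrite map_map; auto).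
 rewrite Pr_scale, length_map; auto. Qed.

Lemma Sw_scale u L t : u <> 0 -> Sw (Sc u L) t = u ^ (pred (length L)) * Sw L (t / u).
Proof. intro Hu. induction L as [|p L IH]; simpl. ring.
 fold (Sc u L). rewrite IH, Pw_scale by auto. destruct L as [|q L]. simpl. ring.
 simpl. field. auto. Qed.

Definition lv (f v : R*R) := fst f * fst v + snd f * snd v.

Fixpoint dprod (v : R*R) (L : list (R*R)) (x y : R) : R :=
  match L with
  | [] => 0
  | f :: L' => lv f v * prod_lin L' x y + linform (fst f) (snd f) x y * dprod v L' x y
  end.

Lemma prod_lin_cons f L x y : prod_lin (f :: L) x y = linform (fst f) (snd f) x y * prod_lin L x y.
Proof. reflexivity. Qed.

Lemma dprod_cons v f L x y : dprod v (f :: L) x y = lv f v * prod_lin L x y + linform (fst f) (snd f) x y * dprod v L x y.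
Proof. reflexivity. Qed.

Lemma perm_dprod v L M : Permutation L M -> forall x y, prod_lin L x y = prod_lin M x y /\ dprod v L x y = dprod v M x y.
Proof. induction 1; intros x0 y0.
 - auto.
 - destruct (IHPermutation x0 y0) as [A B]. rewrite !prod_lin_cons. cbn [dprod]. rewrite A, B. auto.
 - rewrite !prod_lin_cons. cbn [dprod]. rewrite !prod_lin_cons. split; ring.
 - destruct (IHPermutation1 x0 y0), (IHPermutation2 x0 y0). split; congruence. Qed.

Lemma PD_prod_line L x y a b : PD (length L) (fun s => prod_lin L (x + s * a) (y + s * b)).
Proof. induction L as [|f L IH]; simpl.
 apply PD_ext with (fun _ => 1). intro; reflexivity. apply PD_const.
 apply PD_ext with (fun s => ((fst f * x + snd f * y) + (fst f * a + snd f * b) * s) * prod_lin L (x + s * a) (y + s * b)).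
 intro; unfold linform; simpl; ring. apply PD_lin. auto. Qed.

Lemma PD_dprod_line v L x y a b : PD (length L) (fun s => dprod v L (x + s * a) (y + s * b)).
Proof. induction L as [|f L IH]; simpl.
 apply PD_ext with (fun _ => 0). intro; reflexivity. apply PD_const.
 apply PD_add. apply PD_mono with (length L). lia. apply PD_scal. apply PD_prod_line.
 apply PD_ext with (fun s => ((fst f * x + snd f * y) + (fst f * a + snd f * b) * s) * dprod v L (x + s * a) (y + s * b)).
 intro; unfold linform; simpl; ring. apply PD_lin. auto. Qed.

Section NC.
Variable v : R * R.
Let v1 := fst v.
Let v2 := snd v.
Let N := v1 * v1 + v2 * v2.
Definition Tc (x y : R) := (x * fst v + y * snd v) / (fst v * fst v + snd v * snd v).
Definition Uc (x y : R) := (y * fst v - x * snd v) / (fst v * fst v + snd v * snd v).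
Definition rho (f : R*R) := - (- fst f * snd v + snd f * fst v) / lv f v.
Definition WL (L : list (R*R)) := map (fun f => (rho f, 1)) L.
Definition CL (L : list (R*R)) := fold_right (fun f acc => lv f v * acc) 1 L.

Lemma lin_decomp f x y : lv f v <> 0 -> fst v * fst v + snd v * snd v <> 0 ->
  linform (fst f) (snd f) x y = lv f v * (Tc x y - Uc x y * rho f).
Proof. intros H1 H2. unfold linform, Tc, Uc, rho, lv in *. field. auto. Qed.

Lemma prod_rep L x y : (forall f, In f L -> lv f v <> 0) -> fst v * fst v + snd v * snd v <> 0 ->
  prod_lin L x y = CL L * Pw (Sc (Uc x y) (WL L)) (Tc x y).
Proof. intros H HN. induction L as [|f L IH]. unfold CL, Pw; simpl; ring.
 rewrite prod_lin_cons, IH by (intros; apply H; right; auto).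
 rewrite lin_decomp by (auto; apply H; left; auto). simpl. rewrite Pw_cons. simpl. ring. Qed.

Lemma dprod_rep L x y : (forall f, In f L -> lv f v <> 0) -> fst v * fst v + snd v * snd v <> 0 ->
  dprod v L x y = CL L * Sw (Sc (Uc x y) (WL L)) (Tc x y).
Proof. intros H HN. induction L as [|f L IH]. simpl. ring.
 simpl. rewrite IH by (intros; apply H; right; auto).
 rewrite prod_rep by (auto; intros; apply H; right; auto).
 rewrite lin_decomp by (auto; apply H; left; auto). fold (Sc (Uc x y) (WL L)). ring. Qed.

Definition Lp (tau : list R) := map (fun r => ((fst v + r * snd v) / (fst v * fst v + snd v * snd v),
                                              (snd v - r * fst v) / (fst v * fst v + snd v * snd v))) tau.

Lemma Lp_eval tau x y : fst v * fst v + snd v * snd v <> 0 ->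
  Pr (map (fun z => Uc x y * z) tau) (Tc x y) = prod_lin (Lp tau) x y.
Proof. intro HN. induction tau as [|r tau IH]. reflexivity.
 unfold Lp; rewrite !map_cons, prod_lin_cons; fold (Lp tau); rewrite <- IH. simpl. unfold linform, Tc, Uc. field. auto. Qed.

End NC.

Lemma HYP_nonconst v L : L <> [] -> (forall f, In f L -> lv f v <> 0) ->
  exists K L', length L' = pred (length L) /\ forall x y, dprod v L x y = K * prod_lin L' x y.
Proof. intros Hne H.
 assert (HN : fst v * fst v + snd v * snd v <> 0).
 { destruct L as [|f L]. congruence. specialize (H f (or_introl eq_refl)). unfold lv in H.
   intro E. apply H. assert (fst v = 0) by nra. assert (snd v = 0) by nra. rewrite H0, H1. ring. }
 destruct (UNI (length L) (WL v L) ltac:(unfold WL; rewrite length_map; auto)) as [c [tau [Lt Et]]].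
 { destruct L; [congruence|discriminate]. }
 { intros p Hp. unfold WL in Hp. apply in_map_iff in Hp. destruct Hp as [f [<- _]]. simpl; lra. }
 exists (CL v L * c), (Lp v tau). split. unfold Lp. rewrite length_map. auto.
 assert (Main : forall x y, Uc v x y <> 0 -> dprod v L x y = CL v L * c * prod_lin (Lp v tau) x y).
 { intros x y Hu. rewrite dprod_rep by auto. rewrite Sw_scale by auto. rewrite Et.
   rewrite <- Lp_eval by auto. rewrite Pr_scale by auto.
   unfold WL. rewrite length_map. rewrite Lt.
   ring. }
 intros x y. destruct (Req_dec (Uc v x y) 0) as [Hu|Hu]; [|auto].
 set (a := - snd v). set (b := fst v).
 set (h := fun s => dprod v L (x + s * a) (y + s * b) + (- (CL v L * c)) * prod_lin (Lp v tau) (x + s * a) (y + s * b)).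
 assert (Hh : PD (length L) h).
 { unfold h. apply PD_add. apply PD_dprod_line. apply PD_scal. apply PD_mono with (length (Lp v tau)).
   unfold Lp; rewrite length_map; lia. apply PD_prod_line. }
 assert (H0 : h 0 = 0).
 { apply (zero_count _ h Hh). intros s Hs. unfold h. rewrite Main. ring.
   replace (Uc v (x + s * a) (y + s * b)) with (Uc v x y + s) . rewrite Hu. lra.
   unfold Uc, a, b. field. auto. }
 unfold h in H0. replace (x + 0 * a) with x in H0 by ring. replace (y + 0 * b) with y in H0 by ring. lra. Qed.

Lemma HYP : forall n L v, length L = n -> L <> [] ->
  exists K L', length L' = pred n /\ forall x y, dprod v L x y = K * prod_lin L' x y.
Proof. intro n. induction n as [n IH] using lt_wf_ind. intros L v Hl Hne.
 destruct (classic (exists f, In f L /\ lv f v = 0)) as [[f [Hf E]]|Hno].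
 - apply in_split in Hf. destruct Hf as [l1 [l2 ->]].
   assert (P : Permutation (l1 ++ f :: l2) (f :: l1 ++ l2)) by (apply Permutation_sym, Permutation_middle).
   assert (Hl0 : length (l1 ++ l2) = pred n) by (apply Permutation_length in P; simpl in P; lia).
   destruct (l1 ++ l2) as [|g L0] eqn:HL0.
   + exists 0, []. split. simpl in *; lia. intros x y. destruct (perm_dprod v _ _ P x y) as [_ ->].
     simpl. rewrite E. ring.
   + destruct (IH (pred n) ltac:(simpl in *; lia) (g :: L0) v Hl0 ltac:(discriminate)) as [K [L' [HL' EL']]].
     exists K, (f :: L'). split. simpl in *; lia.
     intros x y. destruct (perm_dprod v _ _ P x y) as [_ ->]. rewrite dprod_cons, E.
     rewrite EL', (prod_lin_cons f L'). ring.
 - subst. apply HYP_nonconst; auto. intros f Hf E. apply Hno. eauto. Qed.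

Definition HasD (v : R*R) (f g : R -> R -> R) : Prop :=
  forall x y, derivable_pt_lim (fun t => f (x + t * fst v) (y + t * snd v)) 0 (g x y).

Lemma HasD_unique v f g1 g2 : HasD v f g1 -> HasD v f g2 -> forall x y, g1 x y = g2 x y.
Proof. intros H1 H2 x y. eapply uniqueness_limite; eauto. Qed.

Lemma dlin A B z : derivable_pt_lim (fun t => A + t * B) z B.
Proof. intros eps Heps. exists (mkposreal 1 Rlt_0_1). intros h Hh _.
 replace ((A + (z + h) * B - (A + z * B)) / h - B) with 0 by (field; auto).
 rewrite Rabs_R0. auto. Qed.

Lemma dpowlin A B d : derivable_pt_lim (fun t => (A + t * B) ^ d) 0 (INR d * A ^ (pred d) * B).
Proof. pose proof (derivable_pt_lim_comp (fun t => A + t * B) (fun y => y ^ d) 0 B _ (dlin A B 0)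
   (derivable_pt_lim_pow (A + 0 * B) d)).
 replace (A + 0 * B) with A in H by ring. exact H. Qed.

Lemma dlinform a b x y v : derivable_pt_lim (fun t => linform a b (x + t * fst v) (y + t * snd v)) 0 (lv (a,b) v).
Proof. replace (fun t => linform a b (x + t * fst v) (y + t * snd v)) with (fun t => (a * x + b * y) + t * lv (a,b) v).
 apply dlin. apply functional_extensionality. intro t. unfold linform, lv. simpl. ring. Qed.

Lemma d_prod v L : HasD v (prod_lin L) (dprod v L).
Proof. intros x y. induction L as [|f L IH].
 - exact (derivable_pt_lim_const 1 0).
 - pose proof (derivable_pt_lim_mult _ _ 0 _ _ (dlinform (fst f) (snd f) x y v) IH) as H.
   cbv beta in H. replace (x + 0 * fst v) with x in H by ring. replace (y + 0 * snd v) with y in H by ring.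
   rewrite dprod_cons. destruct f as [a b]. exact H. Qed.

Lemma d_Kprod v K L : HasD v (fun x y => K * prod_lin L x y) (fun x y => K * dprod v L x y).
Proof. intros x y. exact (derivable_pt_lim_scal _ K 0 _ (d_prod v L x y)). Qed.

Definition lvt (t : R*R*R) (v : R*R) := term_al t * fst v + term_be t * snd v.

Fixpoint facv (d : nat) (vs : list (R*R)) (t : R*R*R) : R :=
  match vs with [] => 1 | v :: vs' => INR d * lvt t v * facv (pred d) vs' t end.

Definition scaleR (d : nat) (vs : list (R*R)) (R0 : list (R*R*R)) :=
  map (fun t => (term_lam t * facv d vs t, term_al t, term_be t)) R0.

Lemma rep_eval_cons d t R0 x y : rep_eval d (t :: R0) x y =
  term_lam t * (linform (term_al t) (term_be t) x y) ^ d + rep_eval d R0 x y.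
Proof. destruct t as [[l a] b]. reflexivity. Qed.

Lemma d_rep v d R0 : HasD v (rep_eval d R0) (rep_eval (pred d) (scaleR d [v] R0)).
Proof. intros x y. induction R0 as [|t R0 IH].
 - exact (derivable_pt_lim_const 0 0).
 - destruct t as [[l a] b].
   assert (Hp : derivable_pt_lim (fun s => (linform a b (x + s * fst v) (y + s * snd v)) ^ d) 0
                 (INR d * (linform a b x y) ^ (pred d) * lv (a,b) v)).
   { replace (fun s => (linform a b (x + s * fst v) (y + s * snd v)) ^ d) with
       (fun s => ((a * x + b * y) + s * lv (a,b) v) ^ d). apply dpowlin.
     apply functional_extensionality. intro s. unfold linform, lv. simpl. f_equal. ring. }
   pose proof (derivable_pt_lim_plus _ _ 0 _ _ (derivable_pt_lim_scal _ l 0 _ Hp) IH) as H.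
   replace (rep_eval (pred d) (scaleR d [v] ((l, a, b) :: R0)) x y) with
     (l * (INR d * linform a b x y ^ Init.Nat.pred d * lv (a, b) v) + rep_eval (pred d) (scaleR d [v] R0) x y).
   exact H. unfold scaleR. rewrite map_cons. rewrite rep_eval_cons. simpl. unfold lvt, lv. simpl. ring. Qed.

Inductive IterD : list (R*R) -> (R -> R -> R) -> (R -> R -> R) -> Prop :=
 | ID0 f : IterD [] f f
 | IDS v vs f g h : HasD v f g -> IterD vs g h -> IterD (v :: vs) f h.

Lemma facv_ext d vs t t' : term_al t = term_al t' -> term_be t = term_be t' -> facv d vs t = facv d vs t'.
Proof. intros A B. revert d. induction vs as [|v vs IH]; intro d; simpl. auto. rewrite IH. unfold lvt. rewrite A, B. auto. Qed.

Lemma iter_rep vs : forall d R0, IterD vs (rep_eval d R0) (rep_eval (d - length vs) (scaleR d vs R0)).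
Proof. induction vs as [|v vs IH]; intros d R0.
 - replace (rep_eval (d - length []) (scaleR d [] R0)) with (rep_eval d R0). constructor.
   apply functional_extensionality; intro x; apply functional_extensionality; intro y.
   simpl. rewrite Nat.sub_0_r. induction R0 as [|t R0 IHR]. reflexivity.
   unfold scaleR. rewrite map_cons, !rep_eval_cons. simpl. rewrite IHR. unfold scaleR. simpl. ring.
 - apply IDS with (rep_eval (pred d) (scaleR d [v] R0)). apply d_rep.
   replace (rep_eval (d - length (v :: vs)) (scaleR d (v :: vs) R0)) with
     (rep_eval (pred d - length vs) (scaleR (pred d) vs (scaleR d [v] R0))). apply IH.
   f_equal. simpl. lia. unfold scaleR. rewrite map_map. apply map_ext. intro t. simpl.
   rewrite (facv_ext (pred d) vs (term_lam t * (INR d * lvt t v * 1), term_al t, term_be t) t) by reflexivity.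
   f_equal. f_equal. ring. Qed.

Definition is_hyp (n : nat) (f : R -> R -> R) : Prop :=
  exists K L, length L = n /\ forall x y, f x y = K * prod_lin L x y.

Lemma hyp_step n v f g : is_hyp (S n) f -> HasD v f g -> is_hyp n g.
Proof. intros [K [L [Hl E]]] Hd.
 assert (Ef : f = fun x y => K * prod_lin L x y) by (apply functional_extensionality; intro x; apply functional_extensionality; auto).
 subst f. pose proof (HasD_unique _ _ _ _ Hd (d_Kprod v K L)) as Eg.
 destruct (HYP (S n) L v Hl) as [K' [L' [Hl' E']]]. intro; subst; discriminate.
 exists (K * K'), L'. split; auto. intros x y. rewrite Eg, E'. ring. Qed.

Lemma hyp_iter vs f h : IterD vs f h -> forall n, is_hyp n f -> (length vs <= n)%nat -> is_hyp (n - length vs) h.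
Proof. induction 1; intros n Hh Hl. simpl. rewrite Nat.sub_0_r. auto.
 destruct n as [|n]. simpl in Hl; lia. simpl.
 apply IHIterD. eapply hyp_step; eauto. simpl in Hl; lia. Qed.

Lemma hyp_zero n f : is_hyp n f -> (1 <= n)%nat -> exists x0 y0, (x0 <> 0 \/ y0 <> 0) /\ f x0 y0 = 0.
Proof. intros [K [L [Hl E]]] Hn. destruct L as [|[a b] L]. simpl in Hl; lia.
 destruct (Req_dec a 0) as [Ha|Ha]; [destruct (Req_dec b 0) as [Hb|Hb]|].
 - exists 1, 0. split. left; lra. rewrite E, prod_lin_cons. simpl. unfold linform. rewrite Ha, Hb. ring.
 - exists b, (-a). split. left; auto. rewrite E, prod_lin_cons. simpl. unfold linform. ring.
 - exists b, (-a). split. right; lra. rewrite E, prod_lin_cons. simpl. unfold linform. ring. Qed.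

Lemma kill d p rep vs : is_hyp d p -> (forall x y, p x y = rep_eval d rep x y) -> (length vs < d)%nat ->
  exists x0 y0, (x0 <> 0 \/ y0 <> 0) /\ rep_eval (d - length vs) (scaleR d vs rep) x0 y0 = 0.
Proof. intros Hh Hp Hl. apply (hyp_zero (d - length vs)); [|lia].
 apply (hyp_iter vs (rep_eval d rep)); [apply iter_rep| |lia].
 destruct Hh as [K [L [HL E]]]. exists K, L. split; auto. intros; rewrite <- Hp; auto. Qed.

Definition det (t u : R*R*R) := term_al t * term_be u - term_al u * term_be t.
Definition dirv (u : R*R*R) : R*R := (term_be u, - term_al u).

Lemma lvt_dirv t u : lvt t (dirv u) = det t u.
Proof. unfold lvt, dirv, det. simpl. ring. Qed.

Fixpoint hon (l : list (R*R*R)) : Prop :=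
  match l with [] => True | t :: r => (forall u, In u r -> det t u <> 0) /\ hon r end.

Lemma honest_hon rep : honest rep -> hon rep.
Proof. induction rep as [|t r IH]; intro H; simpl. auto. split.
 - intros u Hu. destruct (In_nth r u (0,0,0) Hu) as [j [Hj Ej]].
   specialize (H 0%nat (S j) ltac:(lia) ltac:(simpl; lia)). simpl in H. rewrite Ej in H. exact H.
 - apply IH. intros i j Hij Hj. apply (H (S i) (S j)); simpl; lia. Qed.

Lemma hon_filter f l : hon l -> hon (filter f l).
Proof. induction l as [|t r IH]; simpl; auto. intros [H1 H2]. destruct (f t); simpl; auto.
 split; auto. intros u Hu. apply filter_In in Hu. apply H1. tauto. Qed.

Lemma hon_diff l t u : hon l -> In t l -> In u l -> t <> u -> det t u <> 0.
Proof. induction l as [|x r IH]; simpl. tauto. intros [H1 H2] Ht Hu Htu.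
 destruct Ht as [<-|Ht]; destruct Hu as [<-|Hu].
 - congruence.
 - auto.
 - intro E. apply (H1 t Ht). unfold det in *. lra.
 - auto. Qed.

Lemma hon_vanish l x0 y0 : hon l -> (x0 <> 0 \/ y0 <> 0) ->
  (forall t, In t l -> linform (term_al t) (term_be t) x0 y0 = 0) -> (length l <= 1)%nat.
Proof. intros Hh Hnz Hv. destruct l as [|t [|u r]]; simpl; try lia.
 exfalso. destruct Hh as [H1 _]. apply (H1 u (or_introl eq_refl)).
 pose proof (Hv t (or_introl eq_refl)) as A. pose proof (Hv u (or_intror (or_introl eq_refl))) as B.
 unfold linform, det in *.
 assert (E1 : x0 * (term_al t * term_be u - term_al u * term_be t) = 0).
 { replace (x0 * (term_al t * term_be u - term_al u * term_be t)) with
     (term_be u * (term_al t * x0 + term_be t * y0) - term_be t * (term_al u * x0 + term_be u * y0)) by ring.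
   rewrite A, B. ring. }
 assert (E2 : y0 * (term_al t * term_be u - term_al u * term_be t) = 0).
 { replace (y0 * (term_al t * term_be u - term_al u * term_be t)) with
     (term_al t * (term_al u * x0 + term_be u * y0) - term_al u * (term_al t * x0 + term_be t * y0)) by ring.
   rewrite A, B. ring. }
 destruct Hnz as [Hx|Hy].
 apply Rmult_integral in E1; destruct E1; [contradiction|auto].
 apply Rmult_integral in E2; destruct E2; [contradiction|auto]. Qed.

Lemma hon_const l m : hon l -> (forall t, In t l -> t = m) -> (length l <= 1)%nat.
Proof. intros Hh Hc. destruct l as [|t [|u r]]; simpl; try lia.
 exfalso. destruct Hh as [H1 _]. apply (H1 u (or_introl eq_refl)).
 rewrite (Hc t (or_introl eq_refl)), (Hc u (or_intror (or_introl eq_refl))). unfold det. ring. Qed.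

Lemma pow2k_nonneg z k : 0 <= z ^ (2 * k).
Proof. rewrite pow_mult. apply pow_le. nra. Qed.

Lemma rep_nonneg k R0 x y sg : (forall t, In t R0 -> 0 <= sg * term_lam t) -> 0 <= sg * rep_eval (2 * k) R0 x y.
Proof. induction R0 as [|t R0 IH]; intro H. simpl; lra. rewrite rep_eval_cons.
 pose proof (pow2k_nonneg (linform (term_al t) (term_be t) x y) k).
 assert (0 <= sg * term_lam t) by (apply H; left; auto).
 assert (0 <= sg * rep_eval (2 * k) R0 x y) by (apply IH; intros; apply H; right; auto).
 replace (sg * (term_lam t * linform (term_al t) (term_be t) x y ^ (2 * k) + rep_eval (2 * k) R0 x y))
   with ((sg * term_lam t) * linform (term_al t) (term_be t) x y ^ (2 * k) + sg * rep_eval (2 * k) R0 x y) by ring.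
 pose proof (Rmult_le_pos _ _ H1 H0). lra. Qed.

Lemma SUM k R0 x y sg : (forall t, In t R0 -> 0 <= sg * term_lam t) -> rep_eval (2 * k) R0 x y = 0 ->
  forall t, In t R0 -> sg * term_lam t <> 0 -> linform (term_al t) (term_be t) x y = 0.
Proof. induction R0 as [|t0 R0 IH]; intros H Z t Ht Hnz. destruct Ht.
 rewrite rep_eval_cons in Z.
 pose proof (pow2k_nonneg (linform (term_al t0) (term_be t0) x y) k).
 assert (0 <= sg * term_lam t0) by (apply H; left; auto).
 assert (0 <= sg * rep_eval (2 * k) R0 x y) by (apply rep_nonneg; intros; apply H; right; auto).
 pose proof (Rmult_le_pos _ _ H1 H0).
 assert (Hsum : sg * term_lam t0 * linform (term_al t0) (term_be t0) x y ^ (2 * k) + sg * rep_eval (2 * k) R0 x y = 0).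
 { replace 0 with (sg * 0) by ring. rewrite <- Z. ring. }
 assert (Hsg : sg <> 0) by (intro E; apply Hnz; rewrite E; ring).
 destruct Ht as [<-|Ht].
 - assert (E : sg * term_lam t0 * linform (term_al t0) (term_be t0) x y ^ (2 * k) = 0) by lra.
   apply Rmult_integral in E. destruct E as [E|E]. contradiction.
   destruct (Req_dec (linform (term_al t0) (term_be t0) x y) 0) as [?|Hn]; auto.
   exfalso. apply (pow_nonzero _ (2 * k) Hn). auto.
 - apply IH; auto. intros; apply H; right; auto.
   assert (E : sg * rep_eval (2 * k) R0 x y = 0) by lra.
   apply Rmult_integral in E. destruct E; [contradiction|auto]. Qed.

Fixpoint dbl (P : list (R*R*R)) : list (R*R) :=
  match P with [] => [] | u :: P' => dirv u :: dirv u :: dbl P' end.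

Lemma dbl_len P : length (dbl P) = (2 * length P)%nat.
Proof. induction P; simpl; lia. Qed.

Lemma facv_dbl_zero d P t : In t P -> facv d (dbl P) t = 0.
Proof. revert d. induction P as [|u P IH]; intros d H. destruct H. simpl.
 destruct H as [<-|H]. rewrite lvt_dirv. unfold det. ring. rewrite IH; auto. ring. Qed.

Lemma facv_dbl_pos d P t : (2 * length P < d)%nat -> (forall u, In u P -> det t u <> 0) -> 0 < facv d (dbl P) t.
Proof. revert d. induction P as [|u P IH]; intros d Hl H; simpl. lra.
 rewrite lvt_dirv. assert (Hd : det t u <> 0) by (apply H; left; auto).
 assert (0 < INR d) by (apply lt_0_INR; simpl in Hl; lia).
 assert (0 < INR (pred d)) by (apply lt_0_INR; simpl in Hl; lia).
 assert (0 < facv (pred (pred d)) (dbl P) t) by (apply IH; [simpl in Hl; lia| intros; apply H; right; auto]).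
 assert (0 < det t u * det t u) by (apply Rsqr_pos_lt in Hd; unfold Rsqr in Hd; auto).
 replace (INR d * det t u * (INR (pred d) * det t u * facv (pred (pred d)) (dbl P) t)) with
   ((INR d * INR (pred d)) * (det t u * det t u) * facv (pred (pred d)) (dbl P) t) by ring.
 apply Rmult_lt_0_compat; [apply Rmult_lt_0_compat|]; auto. apply Rmult_lt_0_compat; auto. Qed.

Lemma posb_iff t : is_posb t = true <-> 0 < term_lam t.
Proof. unfold is_posb. destruct (Rlt_dec 0 (term_lam t)); split; intro; auto; try discriminate; contradiction. Qed.
Lemma negb_iff t : is_negb t = true <-> term_lam t < 0.
Proof. unfold is_negb. destruct (Rlt_dec (term_lam t) 0); split; intro; auto; try discriminate; contradiction. Qed.

Lemma tl_mk a b c : term_lam (a, b, c) = a.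
Proof. reflexivity. Qed.

Lemma in_scaleR d vs rep t : In t rep -> In (term_lam t * facv d vs t, term_al t, term_be t) (scaleR d vs rep).
Proof. intro H. unfold scaleR. apply in_map_iff. eexists; split; [reflexivity|auto]. Qed.

Lemma Core s p rep : (1 <= s)%nat -> is_hyp (2 * s) p -> (forall x y, p x y = rep_eval (2 * s) rep x y) ->
  (forall t, In t rep -> term_lam t <> 0) -> hon rep -> (2 <= length rep)%nat ->
  (s <= length (filter is_posb rep))%nat.
Proof. intros Hs Hh Hp Hl Hon H2.
 remember (filter is_posb rep) as Pp eqn:EPp. remember (filter is_negb rep) as Nn eqn:ENn.
 destruct (le_lt_dec s (length Pp)) as [|Ha]; [auto|exfalso].
 assert (InP : forall t, In t Pp <-> In t rep /\ 0 < term_lam t) by (intro; subst Pp; rewrite filter_In, posb_iff; tauto).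
 assert (InN : forall t, In t Nn <-> In t rep /\ term_lam t < 0) by (intro; subst Nn; rewrite filter_In, negb_iff; tauto).
 assert (Spl : forall t, In t rep -> In t Pp \/ In t Nn).
 { intros t Ht. destruct (Rtotal_order (term_lam t) 0) as [H|[H|H]].
   right; apply InN; auto. exfalso; apply (Hl t Ht H). left; apply InP; auto. }
 assert (DPN : forall t u, In t Pp -> In u Nn -> det t u <> 0 /\ det u t <> 0).
 { intros t u Ht Hu. apply InP in Ht. apply InN in Hu.
   assert (t <> u) by (intro; subst; lra). split; apply (hon_diff rep); tauto || auto. }
 assert (HN1 : (length Nn <= 1)%nat).
 { destruct (kill (2 * s) p rep (dbl Pp) Hh Hp) as [x0 [y0 [Hnz Z]]]. rewrite dbl_len; lia.
   rewrite dbl_len in Z. replace (2 * s - 2 * length Pp)%nat with (2 * (s - length Pp))%nat in Z by lia.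
   apply (hon_vanish Nn x0 y0). subst Nn; apply hon_filter; auto. auto.
   intros t Ht. assert (Ht' := Ht). apply InN in Ht'. destruct Ht' as [Htr Hneg].
   assert (Fpos : 0 < facv (2 * s) (dbl Pp) t).
   { apply facv_dbl_pos. lia. intros u Hu. apply (DPN u t Hu Ht). }
   pose proof (SUM (s - length Pp) (scaleR (2 * s) (dbl Pp) rep) x0 y0 (-1)) as HS.
   refine (HS _ Z _ (in_scaleR _ _ _ _ Htr) _). 2: rewrite tl_mk; intro E; nra.
   intros t' Ht'. unfold scaleR in Ht'. apply in_map_iff in Ht'. destruct Ht' as [t0 [<- Ht0]]. rewrite tl_mk; cbn [facv].
   destruct (Spl t0 Ht0) as [HP|HN].
   rewrite facv_dbl_zero by auto. lra.
   apply InN in HN. assert (0 < facv (2 * s) (dbl Pp) t0).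
   { apply facv_dbl_pos. lia. intros u Hu. apply (DPN u t0 Hu). apply InN; auto. }
   nra. }
 destruct Nn as [|m [|m2 Nr]]; [ | | simpl in HN1; lia].
 -
   destruct (kill (2 * s) p rep [] Hh Hp) as [x0 [y0 [Hnz Z]]]. simpl; lia.
   replace (2 * s - length [])%nat with (2 * s)%nat in Z by (simpl; lia).
   assert (length rep <= 1)%nat; [|lia].
   apply (hon_vanish rep x0 y0 Hon Hnz). intros t Ht.
   assert (Hpos : 0 < term_lam t) by (destruct (Spl t Ht) as [H|[]]; apply InP in H; tauto).
   refine (SUM s (scaleR (2 * s) [] rep) x0 y0 1 _ Z _ (in_scaleR _ _ _ _ Ht) _).
   intros t' Ht'. unfold scaleR in Ht'. apply in_map_iff in Ht'. destruct Ht' as [t0 [<- Ht0]]. rewrite tl_mk; cbn [facv].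
   assert (0 < term_lam t0) by (destruct (Spl t0 Ht0) as [H|[]]; apply InP in H; tauto). lra.
   rewrite tl_mk; cbn [facv]. lra.
 - assert (Hm : In m rep /\ term_lam m < 0) by (apply InN; left; auto).
   assert (Hrep : forall t, In t rep -> In t Pp \/ t = m).
   { intros t Ht. destruct (Spl t Ht) as [H|[H|[]]]; auto. }
   destruct Pp as [|l Pr'].
   { assert (length rep <= 1)%nat; [|lia]. apply (hon_const rep m Hon).
     intros t Ht. destruct (Hrep t Ht) as [[]|]; auto. }
   assert (Hs2 : (2 <= s)%nat) by (simpl in Ha; lia).
   assert (INRpos : 0 < INR (2 * s) /\ 0 < INR (pred (2 * s))) by (split; apply lt_0_INR; lia).
   destruct INRpos as [I1 I2].
   assert (HP1 : (length (l :: Pr') <= 1)%nat).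
   { destruct (kill (2 * s) p rep [dirv m; dirv m] Hh Hp) as [x0 [y0 [Hnz Z]]]. simpl; lia.
     replace (2 * s - length [dirv m; dirv m])%nat with (2 * (s - 1))%nat in Z by (simpl; lia).
     apply (hon_vanish (l :: Pr') x0 y0). rewrite EPp; apply hon_filter; auto. auto.
     intros t Ht. assert (Ht' := Ht). apply InP in Ht'. destruct Ht' as [Htr Hpos].
     assert (Dt : det t m <> 0) by (apply (DPN t m Ht); left; auto).
     refine (SUM (s - 1) (scaleR (2 * s) [dirv m; dirv m] rep) x0 y0 1 _ Z _ (in_scaleR _ _ _ _ Htr) _).
     + intros t' Ht'. unfold scaleR in Ht'. apply in_map_iff in Ht'. destruct Ht' as [t0 [<- Ht0]]. rewrite tl_mk; cbn [facv].
       rewrite !lvt_dirv. destruct (Hrep t0 Ht0) as [H| ->].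
       apply InP in H. destruct H as [_ H].
       assert (0 <= det t0 m * det t0 m) by nra.
       assert (0 <= INR (2 * s) * INR (pred (2 * s)) * (det t0 m * det t0 m)).
       { apply Rmult_le_pos; [apply Rmult_le_pos|]; lra. }
       nra.
       unfold det. ring_simplify. lra.
     + rewrite tl_mk; cbn [facv]. rewrite !lvt_dirv.
       assert (0 < det t m * det t m) by (apply Rsqr_pos_lt in Dt; unfold Rsqr in Dt; auto).
       assert (0 < INR (2 * s) * INR (pred (2 * s)) * (det t m * det t m)).
       { apply Rmult_lt_0_compat; [apply Rmult_lt_0_compat|]; lra. }
       nra. }
   destruct Pr' as [|l2 Pr'']; [|simpl in HP1; lia].
   assert (Hl' : In l rep /\ 0 < term_lam l) by (apply InP; left; auto).
   assert (Dlm : det l m <> 0 /\ det m l <> 0) by (apply DPN; left; auto).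
   set (vp := (fst (dirv m) + fst (dirv l), snd (dirv m) + snd (dirv l))).
   set (vm := (fst (dirv m) - fst (dirv l), snd (dirv m) - snd (dirv l))).
   assert (Cpos : forall t0, In t0 rep -> 0 < term_lam t0 * facv (2 * s) [vp; vm] t0).
   { intros t0 Ht0. cbn [facv]. destruct (Hrep t0 Ht0) as [[<-|[]]| ->].
     - replace (lvt l vp) with (det l m) by (unfold lvt, vp, dirv, det; simpl; ring).
       replace (lvt l vm) with (det l m) by (unfold lvt, vm, dirv, det; simpl; ring).
       destruct Dlm as [D _].
       assert (0 < det l m * det l m) by (apply Rsqr_pos_lt in D; unfold Rsqr in D; auto).
       assert (0 < INR (2 * s) * INR (pred (2 * s)) * (det l m * det l m)).
       { apply Rmult_lt_0_compat; [apply Rmult_lt_0_compat|]; lra. }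
       destruct Hl' as [_ Hl']. nra.
     - replace (lvt m vp) with (det m l) by (unfold lvt, vp, dirv, det; simpl; ring).
       replace (lvt m vm) with (- det m l) by (unfold lvt, vm, dirv, det; simpl; ring).
       destruct Dlm as [_ D].
       assert (0 < det m l * det m l) by (apply Rsqr_pos_lt in D; unfold Rsqr in D; auto).
       assert (0 < INR (2 * s) * INR (pred (2 * s)) * (det m l * det m l)).
       { apply Rmult_lt_0_compat; [apply Rmult_lt_0_compat|]; lra. }
       destruct Hm as [_ Hm]. nra. }
   destruct (kill (2 * s) p rep [vp; vm] Hh Hp) as [x0 [y0 [Hnz Z]]]. simpl; lia.
   replace (2 * s - length [vp; vm])%nat with (2 * (s - 1))%nat in Z by (simpl; lia).
   assert (length rep <= 1)%nat; [|lia].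
   apply (hon_vanish rep x0 y0 Hon Hnz). intros t Ht.
   refine (SUM (s - 1) (scaleR (2 * s) [vp; vm] rep) x0 y0 1 _ Z _ (in_scaleR _ _ _ _ Ht) _).
   + intros t' Ht'. unfold scaleR in Ht'. apply in_map_iff in Ht'. destruct Ht' as [t0 [<- Ht0]].
     change (term_lam (term_lam t0 * facv (2 * s) [vp; vm] t0, term_al t0, term_be t0)) with
       (term_lam t0 * facv (2 * s) [vp; vm] t0).
     pose proof (Cpos t0 Ht0). lra.
   + change (term_lam (term_lam t * facv (2 * s) [vp; vm] t, term_al t, term_be t)) with
       (term_lam t * facv (2 * s) [vp; vm] t).
     pose proof (Cpos t Ht). lra.
Qed.

Definition negt (t : R*R*R) : R*R*R := (- term_lam t, term_al t, term_be t).

Lemma rep_eval_neg d R0 x y : rep_eval d (map negt R0) x y = - rep_eval d R0 x y.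
Proof. induction R0 as [|t R0 IH]. simpl; ring. rewrite map_cons, !rep_eval_cons, IH. unfold negt. simpl. ring. Qed.

Lemma hon_neg R0 : hon R0 -> hon (map negt R0).
Proof. induction R0 as [|t R0 IH]; simpl; auto. intros [H1 H2]. split; auto.
 intros u Hu. apply in_map_iff in Hu. destruct Hu as [u0 [<- Hu0]]. unfold negt, det in *. simpl. apply H1; auto. Qed.

Lemma filter_neg R0 : length (filter is_posb (map negt R0)) = length (filter is_negb R0).
Proof. induction R0 as [|t R0 IH]; simpl. auto. unfold is_posb at 1, is_negb at 1. unfold negt at 1. simpl.
 destruct (Rlt_dec 0 (- term_lam t)), (Rlt_dec (term_lam t) 0); simpl; try lra; auto. Qed.

Lemma root_pow l n : 0 < l -> (0 < n)%nat -> (Rpower l (/ INR n)) ^ n = l.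
Proof. intros Hl Hn. rewrite <- Rpower_pow. rewrite Rpower_mult. rewrite Rinv_l. apply Rpower_1; auto.
 apply not_0_INR; lia. unfold Rpower. apply exp_pos. Qed.

Theorem corollary2p6 (s : nat) (p : R -> R -> R) :
  (1 <= s)%nat ->
  is_prod_of_linforms (2 * s) p ->
  (forall alpha beta : R,
      ~ (forall x y, p x y = (linform alpha beta x y) ^ (2 * s)) /\
      ~ (forall x y, p x y = - (linform alpha beta x y) ^ (2 * s))) ->
  forall a b : nat, badges (2 * s) p (a, b) -> (s <= a)%nat /\ (s <= b)%nat.
Proof.
 intros Hs [L [HL EL]] Hnp a b [rep [[Hl Hp] [Hhon Hb]]].
 unfold badge in Hb. injection Hb as Ea Eb.
 assert (Hh : is_hyp (2 * s) p) by (exists 1, L; split; auto; intros; rewrite EL; ring).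
 assert (H2 : (2 <= length rep)%nat).
 { destruct rep as [|t [|t2 r]]; simpl; try lia; exfalso.
   - apply (proj1 (Hnp 0 0)). intros x y. rewrite Hp. simpl. unfold linform.
     replace (0 * x + 0 * y) with 0 by ring. rewrite pow_i by lia. auto.
   - destruct t as [[l al] be]. assert (Hl0 : l <> 0) by (apply (Hl (l,al,be)); left; auto).
     assert (Hn : (0 < 2 * s)%nat) by lia.
     destruct (Rtotal_order l 0) as [Hneg|[|Hpos]]; [|contradiction|].
     + set (c := Rpower (- l) (/ INR (2 * s))).
       apply (proj2 (Hnp (c * al) (c * be))). intros x y. rewrite Hp. simpl.
       replace (linform (c * al) (c * be) x y) with (c * linform al be x y) by (unfold linform; ring).
       rewrite Rpow_mult_distr. unfold c. rewrite root_pow by (auto; lra). ring.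
     + set (c := Rpower l (/ INR (2 * s))).
       apply (proj1 (Hnp (c * al) (c * be))). intros x y. rewrite Hp. simpl.
       replace (linform (c * al) (c * be) x y) with (c * linform al be x y) by (unfold linform; ring).
       rewrite Rpow_mult_distr. unfold c. rewrite root_pow by auto. ring. }
 split.
 - subst a. apply (Core s p rep); auto. apply honest_hon; auto.
 - subst b. rewrite <- filter_neg. apply (Core s (fun x y => - p x y) (map negt rep)); auto.
   + destruct Hh as [K [L0 [HL0 E0]]]. exists (- K), L0. split; auto. intros; rewrite E0; ring.
   + intros x y. rewrite rep_eval_neg, Hp. auto.
   + intros t Ht. apply in_map_iff in Ht. destruct Ht as [t0 [<- Ht0]]. unfold negt. simpl.
     intro E. apply (Hl t0 Ht0). lra.
   + apply hon_neg, honest_hon; auto.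
   + rewrite length_map; auto.
Qed.
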